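(* Let $X$ be a Banach space and $(x_n^* )_{n\ge1}$ a sequence in $X^*$ which does not converge to $0$ in the weak topology $\sigma(X^*,X^{**})$. Then there exist a subsequence $(x^*_{n_k})_{k\ge1}$ and $\delta>0$ such that for every finite set $F\subseteq\mathbb N$ there exists $x_F\in X$ with $\|x_F\|_X=1$ and $|\langle x_F,x^*_{n_k}\rangle|\ge\delta$ for all $k\in F$. Moreover, if $X=E$ is a Banach lattice and $x_n^*\ge0$ for all $n$, then $x_F$ may be chosen with $x_F\ge 0$. *)

(* Defs.v *)
From Stdlib Require Import Reals List.
Open Scope R_scope.

Record NormedSpace := {
  ns_carrier :> Type;
  vzero : ns_carrier;
  vadd : ns_carrier -> ns_carrier -> ns_carrier;
  vopp : ns_carrier -> ns_carrier;
  vscal : R -> ns_carrier -> ns_carrier;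
  vnorm : ns_carrier -> R;
  vaddA : forall x y z, vadd x (vadd y z) = vadd (vadd x y) z;
  vaddC : forall x y, vadd x y = vadd y x;
  vadd0 : forall x, vadd vzero x = x;
  vaddN : forall x, vadd x (vopp x) = vzero;
  vscal1 : forall x, vscal 1 x = x;
  vscalA : forall a b x, vscal a (vscal b x) = vscal (a * b) x;
  vscalDl : forall a b x, vscal (a + b) x = vadd (vscal a x) (vscal b x);
  vscalDr : forall a x y, vscal a (vadd x y) = vadd (vscal a x) (vscal a y);
  vnorm_eq0 : forall x, vnorm x = 0 -> x = vzero;
  vnormZ : forall a x, vnorm (vscal a x) = Rabs a * vnorm x;
  vnorm_triangle : forall x y, vnorm (vadd x y) <= vnorm x + vnorm y
}.
Arguments vzero {_}. Arguments vadd {_}. Arguments vopp {_}.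
Arguments vscal {_}. Arguments vnorm {_}.

Definition vsub {X : NormedSpace} (x y : X) : X := vadd x (vopp y).

Definition complete (X : NormedSpace) : Prop :=
  forall u : nat -> X,
    (forall eps, 0 < eps -> exists N, forall m n, (N <= m)%nat -> (N <= n)%nat ->
        vnorm (vsub (u m) (u n)) < eps) ->
    exists l : X, forall eps, 0 < eps -> exists N, forall n, (N <= n)%nat ->
        vnorm (vsub (u n) l) < eps.

Record BanachSpace := {
  bs_ns :> NormedSpace;
  bs_complete : complete bs_ns
}.

Record BanachLattice := {
  bl_bs :> BanachSpace;
  vle : bl_bs -> bl_bs -> Prop;
  vjoin : bl_bs -> bl_bs -> bl_bs;
  vle_refl : forall x, vle x x;
  vle_trans : forall x y z, vle x y -> vle y z -> vle x z;
  vle_anti : forall x y, vle x y -> vle y x -> x = y;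
  vle_add : forall x y z, vle x y -> vle (vadd x z) (vadd y z);
  vle_scal : forall a x y, 0 <= a -> vle x y -> vle (vscal a x) (vscal a y);
  vjoin_ubl : forall x y, vle x (vjoin x y);
  vjoin_ubr : forall x y, vle y (vjoin x y);
  vjoin_lub : forall x y z, vle x z -> vle y z -> vle (vjoin x y) z;
  vnorm_lattice : forall x y,
    vle (vjoin x (vopp x)) (vjoin y (vopp y)) -> vnorm x <= vnorm y
}.
Arguments vle {_}. Arguments vjoin {_}.

Definition is_linear_functional (X : NormedSpace) (f : X -> R) : Prop :=
  (forall x y, f (vadd x y) = f x + f y) /\ (forall a x, f (vscal a x) = a * f x).

Definition in_dual (X : NormedSpace) (f : X -> R) : Prop :=
  is_linear_functional X f /\ exists M, forall x, Rabs (f x) <= M * vnorm x.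

(** Elements of the bidual the bidual: bounded linear functionals on the dual,
    where the dual carries the operator norm (|Phi f| <= C * ||f|| is written
    out as: |Phi f| <= C * M whenever M >= 0 bounds f). *)
Definition in_bidual (X : NormedSpace) (Phi : (X -> R) -> R) : Prop :=
  (forall f g, in_dual X f -> in_dual X g ->
      Phi (fun x => f x + g x) = Phi f + Phi g) /\
  (forall a f, in_dual X f -> Phi (fun x => a * f x) = a * Phi f) /\
  (exists C, forall f M, in_dual X f -> 0 <= M ->
      (forall x, Rabs (f x) <= M * vnorm x) -> Rabs (Phi f) <= C * M).

Definition weakly_null (X : NormedSpace) (xs : nat -> X -> R) : Prop :=
  forall Phi, in_bidual X Phi -> Un_cv (fun n => Phi (xs n)) 0.

(* Main.v *)
Require Import Defs.
From Stdlib Require Import Reals List Lra Lia Classical ClassicalEpsilon FunctionalExtensionality.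
Open Scope R_scope.

Lemma vadd0r (X : NormedSpace) (x : X) : vadd x vzero = x.
Proof. rewrite vaddC, vadd0. reflexivity. Qed.

Lemma vadd_cancel (X : NormedSpace) (x y z : X) : vadd x y = vadd x z -> y = z.
Proof.
  intro H.
  assert (H0 : vadd (vopp x) (vadd x y) = vadd (vopp x) (vadd x z)) by (rewrite H; reflexivity).
  rewrite !vaddA, (vaddC X (vopp x) x), vaddN, !vadd0 in H0. exact H0.
Qed.

Lemma vscal0r (X : NormedSpace) a : vscal a (@vzero X) = vzero.
Proof.
  apply (vadd_cancel X (vscal a vzero)). rewrite <- vscalDr, vadd0, vadd0r. reflexivity.
Qed.

Lemma vscal0l (X : NormedSpace) (x : X) : vscal 0 x = vzero.
Proof.
  apply (vadd_cancel X (vscal 0 x)). rewrite <- vscalDl, Rplus_0_r, vadd0r. reflexivity.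
Qed.

Lemma vopp_scal (X : NormedSpace) (x : X) : vopp x = vscal (-1) x.
Proof.
  apply (vadd_cancel X x). rewrite vaddN.
  replace (vadd x (vscal (-1) x)) with (vadd (vscal 1 x) (vscal (-1) x)) by (rewrite vscal1; reflexivity).
  rewrite <- vscalDl. replace (1 + -1) with 0 by ring. rewrite vscal0l. reflexivity.
Qed.

Lemma vnorm0 (X : NormedSpace) : vnorm (@vzero X) = 0.
Proof. rewrite <- (vscal0l X vzero), vnormZ, Rabs_R0. ring. Qed.

Lemma vnorm_opp (X : NormedSpace) (x : X) : vnorm (vopp x) = vnorm x.
Proof. rewrite vopp_scal, vnormZ, Rabs_left by lra. ring. Qed.

Lemma vnorm_ge0 (X : NormedSpace) (x : X) : 0 <= vnorm x.
Proof.
  pose proof (vnorm_triangle X x (vopp x)) as H.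
  rewrite vaddN, vnorm0, vnorm_opp in H. lra.
Qed.

Lemma lin0 (X : NormedSpace) (f : X -> R) : is_linear_functional X f -> f vzero = 0.
Proof.
  intros [_ Hs]. rewrite <- (vscal0l X vzero), Hs. ring.
Qed.

Lemma linopp (X : NormedSpace) (f : X -> R) x : is_linear_functional X f -> f (vopp x) = - f x.
Proof.
  intros [_ Hs]. rewrite vopp_scal, Hs. ring.
Qed.

Fixpoint sl (F : list nat) (h : nat -> R) : R :=
  match F with nil => 0 | k :: F' => h k + sl F' h end.

Lemma sl_ext F h1 h2 : (forall k, In k F -> h1 k = h2 k) -> sl F h1 = sl F h2.
Proof.
  induction F as [|k F IH]; simpl; intros H; [reflexivity|].
  rewrite H by auto. rewrite IH by auto. reflexivity.
Qed.

Lemma sl_add F h1 h2 : sl F (fun k => h1 k + h2 k) = sl F h1 + sl F h2.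
Proof. induction F as [|k F IH]; simpl; [ring|rewrite IH; ring]. Qed.

Lemma sl_scal F c h : sl F (fun k => c * h k) = c * sl F h.
Proof. induction F as [|k F IH]; simpl; [ring|rewrite IH; ring]. Qed.

Lemma sl_le F h1 h2 : (forall k, In k F -> h1 k <= h2 k) -> sl F h1 <= sl F h2.
Proof.
  induction F as [|k F IH]; simpl; intros H; [lra|].
  pose proof (H k (or_introl eq_refl)). pose proof (IH (fun j Hj => H j (or_intror Hj))). lra.
Qed.

Lemma sl_ge0 F h : (forall k, 0 <= h k) -> 0 <= sl F h.
Proof.
  induction F as [|k F IH]; simpl; intros H; [lra|].
  pose proof (H k). pose proof (IH H). lra.
Qed.

Lemma sl_term F h k : (forall j, 0 <= h j) -> In k F -> h k <= sl F h.
Proof.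
  induction F as [|j F IH]; simpl; intros H Hk; [contradiction|].
  destruct Hk as [<-|Hk].
  - pose proof (sl_ge0 F h H). lra.
  - pose proof (IH H Hk). pose proof (H j). lra.
Qed.

Lemma in_dual_sum (X : NormedSpace) (f : nat -> X -> R) (a : nat -> R) F :
  (forall k, in_dual X (f k)) -> in_dual X (fun x => sl F (fun k => a k * f k x)).
Proof.
  intros Hd. induction F as [|k F IH]; simpl.
  - split; [split; intros; ring|]. exists 0. intros. rewrite Rabs_R0. lra.
  - destruct IH as [[IHa IHs] [M HM]].
    destruct (Hd k) as [[Ha Hs] [Mk HMk]].
    split; [split|].
    + intros x y. rewrite Ha, IHa. ring.
    + intros c x. rewrite Hs, IHs. ring.
    + exists (Rabs (a k) * Mk + M). intros x.
      eapply Rle_trans; [apply Rabs_triang|].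
      rewrite Rabs_mult. pose proof (HM x). pose proof (HMk x).
      pose proof (Rabs_pos (a k)).
      assert (Rabs (a k) * Rabs (f k x) <= Rabs (a k) * (Mk * vnorm x)) by
        (apply Rmult_le_compat_l; lra).
      lra.
Qed.

Lemma Phi_sum (X : NormedSpace) (f : nat -> X -> R) (a : nat -> R) F (Phi : (X -> R) -> R) :
  (forall k, in_dual X (f k)) ->
  (forall g h, in_dual X g -> in_dual X h -> Phi (fun x => g x + h x) = Phi g + Phi h) ->
  (forall c g, in_dual X g -> Phi (fun x => c * g x) = c * Phi g) ->
  Phi (fun x => sl F (fun k => a k * f k x)) = sl F (fun k => a k * Phi (f k)).
Proof.
  intros Hd Hadd Hsc. induction F as [|k F IH]; simpl.
  - assert (E : (fun _ : X => 0) = (fun x => 0 * (fun _ : X => 0) x)) by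
      (apply functional_extensionality; intros; ring).
    rewrite E, Hsc; [ring|].
    exact (in_dual_sum X f a nil Hd).
  - assert (Hk : in_dual X (fun y => a k * f k y)).
    { destruct (Hd k) as [[Ha Hs] [Mk HMk]]. split; [split|].
      + intros. rewrite Ha. ring.
      + intros. rewrite Hs. ring.
      + exists (Rabs (a k) * Mk). intros x. rewrite Rabs_mult.
        pose proof (HMk x). pose proof (Rabs_pos (a k)).
        rewrite Rmult_assoc. apply Rmult_le_compat_l; lra. }
    pose proof (Hadd _ _ Hk (in_dual_sum X f a F Hd)) as E. cbv beta in E.
    rewrite E, IH, Hsc by apply Hd. reflexivity.
Qed.

Lemma bound_list (X : NormedSpace) (f : nat -> X -> R) F :
  (forall k, in_dual X (f k)) ->
  exists Mb, 0 <= Mb /\ forall k, In k F -> forall x, Rabs (f k x) <= Mb * vnorm x.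
Proof.
  intros Hd. induction F as [|k F IH].
  - exists 0. split; [lra|]. simpl; tauto.
  - destruct IH as [Mb [HMb H]]. destruct (Hd k) as [_ [M HM]].
    exists (Rmax (Rmax M 0) Mb). split.
    + eapply Rle_trans; [|apply Rmax_l]. apply Rmax_r.
    + intros j [<-|Hj] x; pose proof (vnorm_ge0 X x).
      * eapply Rle_trans; [apply HM|]. apply Rmult_le_compat_r; [lra|].
        eapply Rle_trans; [apply Rmax_l|apply Rmax_l].
      * eapply Rle_trans; [apply H; auto|]. apply Rmult_le_compat_r; [lra|]. apply Rmax_r.
Qed.

Definition Dist (X : NormedSpace) (f : nat -> X -> R) (F : list nat) (q : nat -> R) (x : X) :=
  sl F (fun k => (f k x - q k)^2).

Lemma core (X : NormedSpace) (f : nat -> X -> R) (F : list nat) (Phi : (X -> R) -> R)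
  (C : R) (q : nat -> R) :
  (forall k, in_dual X (f k)) ->
  (forall g h, in_dual X g -> in_dual X h -> Phi (fun x => g x + h x) = Phi g + Phi h) ->
  (forall c g, in_dual X g -> Phi (fun x => c * g x) = c * Phi g) ->
  (forall g M, in_dual X g -> 0 <= M -> (forall x, Rabs (g x) <= M * vnorm x) ->
     Rabs (Phi g) <= C * M) ->
  0 < C -> (forall k, Phi (f k) = C * q k) ->
  forall eta, 0 < eta -> exists x : X, vnorm x <= 1 /\ Dist X f F q x < eta.
Proof.
  intros Hd Hadd Hsc Hb HC Hq eta Heta.
  apply NNPP; intro Hno.
  assert (H1 : forall x, vnorm x <= 1 -> eta <= Dist X f F q x).
  { intros x Hx. apply Rnot_lt_le. intro Hlt. apply Hno. exists x; auto. }
  assert (HD0 : forall x, 0 <= Dist X f F q x).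
  { intros x. apply sl_ge0. intros k. apply pow2_ge_0. }
  pose (E := fun r => exists x, vnorm x <= 1 /\ r = - Dist X f F q x).
  assert (Hbd : bound E).
  { exists 0. intros r [x [_ ->]]. pose proof (HD0 x). lra. }
  assert (Hne : exists r, E r).
  { exists (- Dist X f F q vzero). exists vzero. split; [rewrite vnorm0; lra|reflexivity]. }
  destruct (completeness E Hbd Hne) as [s [Hub Hleast]].
  set (d := - s).
  assert (Hdeta : eta <= d).
  { assert (s <= - eta); [|unfold d; lra].
    apply Hleast. intros r [x [Hx ->]]. pose proof (H1 x Hx). lra. }
  assert (Hdmin : forall x, vnorm x <= 1 -> d <= Dist X f F q x).
  { intros x Hx. assert (- Dist X f F q x <= s) by (apply Hub; exists x; auto). unfold d; lra. }
  assert (Hnear : forall tau, 0 < tau -> exists x0, vnorm x0 <= 1 /\ Dist X f F q x0 < d + tau).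
  { intros tau Htau. apply NNPP; intro Hn.
    assert (s <= s - tau); [|lra].
    apply Hleast. intros r [x [Hx ->]].
    assert (d + tau <= Dist X f F q x).
    { apply Rnot_lt_le. intro Hlt. apply Hn. exists x; auto. }
    unfold d in *; lra. }
  destruct (bound_list X f F Hd) as [Mb [HMb HMbF]].
  set (B0 := sl F (fun _ => 4 * Mb ^ 2)).
  assert (HB0 : 0 <= B0).
  { apply sl_ge0. intros; nra. }
  assert (Hdpos : 0 < d) by lra.
  set (t := d / (2 * (B0 + d))).
  assert (Ht : t * (2 * (B0 + d)) = d) by (unfold t; field; lra).
  assert (Htpos : 0 < t) by (unfold t; apply Rdiv_lt_0_compat; lra).
  assert (Htle : t <= 1) by nra.
  assert (HtB : t * B0 <= d / 2) by nra.
  destruct (Hnear (t * d / 2)) as [x0 [Hx0 Hx0d]]; [nra|].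
  set (a := fun k => q k - f k x0).
  set (g := fun x => sl F (fun k => a k * f k x)).
  assert (Hgd : in_dual X g) by (apply in_dual_sum; exact Hd).
  assert (Hglin : is_linear_functional X g) by apply Hgd.
  assert (Hdist0 : Dist X f F q x0 = sl F (fun k => a k ^ 2)).
  { apply sl_ext. intros. unfold a. ring. }
  assert (Hkey : forall x, vnorm x <= 1 -> g x <= g x0 + d / 2).
  { intros x Hx.
    set (xt := vadd (vscal (1 - t) x0) (vscal t x)).
    assert (Hxt : vnorm xt <= 1).
    { unfold xt. eapply Rle_trans; [apply vnorm_triangle|].
      rewrite !vnormZ, !Rabs_pos_eq by lra. nra. }
    assert (Hfxt : forall k, f k xt = (1 - t) * f k x0 + t * f k x).
    { intros k. destruct (Hd k) as [[Ha Hs] _]. unfold xt. rewrite Ha, !Hs. reflexivity. }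
    assert (HS : sl F (fun k => (f k x - f k x0) ^ 2) <= B0).
    { apply sl_le. intros k Hk.
      pose proof (HMbF k Hk x). pose proof (HMbF k Hk x0).
      pose proof (vnorm_ge0 X x). pose proof (vnorm_ge0 X x0).
      assert (Rabs (f k x) <= Mb) by nra.
      assert (Rabs (f k x0) <= Mb) by nra.
      rewrite <- pow2_abs.
      assert (Rabs (f k x - f k x0) <= 2 * Mb).
      { unfold Rminus. eapply Rle_trans; [apply Rabs_triang|]. rewrite Rabs_Ropp. lra. }
      pose proof (Rabs_pos (f k x - f k x0)). nra. }
    assert (Hexp : Dist X f F q xt =
      sl F (fun k => a k ^ 2) + (-2 * t) * g x + (2 * t) * g x0
      + t ^ 2 * sl F (fun k => (f k x - f k x0) ^ 2)).
    { unfold g. rewrite <- !sl_scal, <- !sl_add. apply sl_ext. intros k _.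
      unfold a. rewrite Hfxt. ring. }
    pose proof (Hdmin xt Hxt).
    assert (2 * t * (g x - g x0) < t * d / 2 + t ^ 2 * B0).
    { assert (t ^ 2 * sl F (fun k => (f k x - f k x0) ^ 2) <= t ^ 2 * B0).
      { apply Rmult_le_compat_l; [nra|exact HS]. }
      lra. }
    assert (2 * (g x - g x0) < d / 2 + t * B0).
    { apply (Rmult_lt_reg_l t); [exact Htpos|]. nra. }
    lra. }
  set (Mg := g x0 + d / 2).
  assert (Hkey2 : forall x, vnorm x <= 1 -> Rabs (g x) <= Mg).
  { intros x Hx. apply Rabs_le. split.
    - pose proof (Hkey (vopp x)) as Hk. rewrite vnorm_opp, linopp in Hk by exact Hglin.
      unfold Mg. specialize (Hk Hx). lra.
    - apply Hkey; exact Hx. }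
  assert (HMg : 0 <= Mg).
  { pose proof (Hkey2 vzero) as Hk. rewrite vnorm0 in Hk.
    pose proof (Rabs_pos (g vzero)). specialize (Hk ltac:(lra)). lra. }
  assert (Hgb : forall x, Rabs (g x) <= Mg * vnorm x).
  { intros x. destruct (Req_dec (vnorm x) 0) as [Hz|Hz].
    - apply vnorm_eq0 in Hz. subst x. rewrite lin0 by exact Hglin. rewrite vnorm0, Rabs_R0. lra.
    - pose proof (vnorm_ge0 X x) as Hn.
      assert (Hnp : 0 < vnorm x) by lra.
      pose proof (Hkey2 (vscal (/ vnorm x) x)) as Hk.
      rewrite vnormZ, Rabs_pos_eq in Hk by (left; apply Rinv_0_lt_compat; lra).
      rewrite Rinv_l in Hk by lra. specialize (Hk (Rle_refl _)).
      destruct Hglin as [_ Hgs]. rewrite Hgs, Rabs_mult, Rabs_pos_eq in Hk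
        by (left; apply Rinv_0_lt_compat; lra).
      apply (Rmult_le_reg_l (/ vnorm x)); [apply Rinv_0_lt_compat; lra|].
      replace (/ vnorm x * (Mg * vnorm x)) with Mg by (field; lra). exact Hk. }
  pose proof (Hb g Mg Hgd HMg Hgb) as HPhi.
  assert (HPg : Phi g = C * (Dist X f F q x0 + g x0)).
  { unfold g. rewrite (Phi_sum X f a F Phi Hd Hadd Hsc).
    rewrite Hdist0. rewrite <- sl_add, <- sl_scal. apply sl_ext. intros k _.
    rewrite Hq. unfold a. ring. }
  rewrite HPg in HPhi.
  pose proof (Rle_abs (C * (Dist X f F q x0 + g x0))).
  pose proof (Hdmin x0 Hx0).
  assert (C * (d + g x0) <= C * Mg) by nra.
  assert (d + g x0 <= Mg) by (apply (Rmult_le_reg_l C); lra).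
  unfold Mg in *. lra.
Qed.

Fixpoint mkseq (h : nat -> nat) (k : nat) : nat :=
  match k with O => h O | S k' => h (S (mkseq h k')) end.

Lemma common (X : NormedSpace) (xs : nat -> X -> R) :
  (forall n, in_dual X (xs n)) -> ~ weakly_null X xs ->
  exists (phi : nat -> nat) (delta : R),
    (forall k, (phi k < phi (S k))%nat) /\ 0 < delta /\
    forall F : list nat, exists x : X, vnorm x <= 1 /\
      forall k, In k (0%nat :: F) -> delta <= Rabs (xs (phi k) x).
Proof.
  intros Hd Hnw. unfold weakly_null in Hnw.
  apply not_all_ex_not in Hnw. destruct Hnw as [Phi HP].
  apply imply_to_and in HP. destruct HP as [HbP Hncv].
  assert (Hinf : exists eps, 0 < eps /\ forall N, exists n, (N <= n)%nat /\ eps <= Rabs (Phi (xs n))).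
  { unfold Un_cv in Hncv. apply not_all_ex_not in Hncv. destruct Hncv as [eps He].
    apply imply_to_and in He. destruct He as [Hep He]. exists eps. split; [lra|].
    intros N. apply NNPP. intro Hn. apply He. exists N. intros n Hn'.
    unfold R_dist. rewrite Rminus_0_r. apply Rnot_le_lt. intro Hl. apply Hn. exists n. auto. }
  destruct Hinf as [eps [Heps Hinf]].
  pose (h := fun N => proj1_sig (constructive_indefinite_description _ (Hinf N))).
  assert (Hh : forall N, (N <= h N)%nat /\ eps <= Rabs (Phi (xs (h N)))).
  { intros N. unfold h. destruct (constructive_indefinite_description _ (Hinf N)) as [n Hn]. exact Hn. }
  destruct HbP as [Hadd [Hsc [C HC]]].
  set (C' := Rmax C 1).
  assert (HC'1 : 1 <= C') by apply Rmax_r.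
  assert (HC' : forall g M, in_dual X g -> 0 <= M -> (forall x, Rabs (g x) <= M * vnorm x) ->
     Rabs (Phi g) <= C' * M).
  { intros g M Hg HM Hb. eapply Rle_trans; [apply (HC g M Hg HM Hb)|].
    apply Rmult_le_compat_r; [lra|apply Rmax_l]. }
  exists (mkseq h), (eps / (2 * C')). split; [|split].
  - intros k. simpl. destruct (Hh (S (mkseq h k))). lia.
  - apply Rdiv_lt_0_compat; lra.
  - intros F.
    set (f := fun k => xs (mkseq h k)).
    set (q := fun k => Phi (f k) / C').
    assert (Hfd : forall k, in_dual X (f k)) by (intros; apply Hd).
    assert (Hq : forall k, Phi (f k) = C' * q k) by (intros; unfold q; field; lra).
    set (delta := eps / (2 * C')).
    assert (Hdel : 0 < delta) by (apply Rdiv_lt_0_compat; lra).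
    destruct (core X f (0%nat :: F) Phi C' q Hfd Hadd Hsc HC' ltac:(lra) Hq (delta ^ 2))
      as [x [Hx HD]]; [nra|].
    exists x. split; [exact Hx|]. intros k Hk.
    assert (Hsq : (f k x - q k) ^ 2 < delta ^ 2).
    { eapply Rle_lt_trans; [|exact HD]. unfold Dist.
      apply (sl_term _ (fun k => (f k x - q k) ^ 2)); [intros; apply pow2_ge_0|exact Hk]. }
    assert (Habs : Rabs (f k x - q k) < delta).
    { apply Rnot_le_lt. intro Hl. rewrite <- pow2_abs in Hsq. nra. }
    assert (Hqk : 2 * delta <= Rabs (q k)).
    { unfold q, delta. unfold Rdiv. rewrite Rabs_mult, (Rabs_pos_eq (/ C')) by
        (left; apply Rinv_0_lt_compat; lra).
      destruct k as [|k']; simpl in f.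
      - pose proof (proj2 (Hh 0%nat)). unfold f; simpl.
        replace (2 * (eps * / (2 * C'))) with (eps * / C') by (field; lra).
        apply Rmult_le_compat_r; [left; apply Rinv_0_lt_compat; lra|exact H].
      - pose proof (proj2 (Hh (S (mkseq h k')))). unfold f; simpl.
        replace (2 * (eps * / (2 * C'))) with (eps * / C') by (field; lra).
        apply Rmult_le_compat_r; [left; apply Rinv_0_lt_compat; lra|exact H]. }
    pose proof (Rabs_triang (q k - f k x) (f k x)) as Ht.
    replace (q k - f k x + f k x) with (q k) in Ht by ring.
    rewrite <- Rabs_Ropp in Habs. replace (- (f k x - q k)) with (q k - f k x) in Habs by ring.
    fold (f k). lra.
Qed.

Lemma normalize (X : NormedSpace) (x : X) : 0 < vnorm x -> vnorm x <= 1 ->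
  vnorm (vscal (/ vnorm x) x) = 1 /\
  forall h, is_linear_functional X h -> Rabs (h x) <= Rabs (h (vscal (/ vnorm x) x)).
Proof.
  intros Hp H1. assert (Hi : 0 < / vnorm x) by (apply Rinv_0_lt_compat; lra).
  split.
  - rewrite vnormZ, Rabs_pos_eq by lra. field. lra.
  - intros h [_ Hs]. rewrite Hs, Rabs_mult, (Rabs_pos_eq (/ vnorm x)) by lra.
    pose proof (Rabs_pos (h x)).
    assert (vnorm x * / vnorm x = 1) by (field; lra). nra.
Qed.

Lemma nonzero_of (X : NormedSpace) (f : X -> R) (x : X) (delta : R) :
  is_linear_functional X f -> 0 < delta -> delta <= Rabs (f x) -> 0 < vnorm x.
Proof.
  intros Hl Hd Hf. destruct (Req_dec (vnorm x) 0) as [Hz|Hz].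
  - apply vnorm_eq0 in Hz. subst. rewrite lin0, Rabs_R0 in Hf by exact Hl. lra.
  - pose proof (vnorm_ge0 X x). lra.
Qed.

Definition vabs (E : BanachLattice) (x : E) : E := vjoin x (vopp x).

Lemma vabs_ge0 (E : BanachLattice) (x : E) : vle vzero (vabs E x).
Proof.
  set (j := vabs E x).
  pose proof (vle_add E x j (vopp x) (vjoin_ubl E x (vopp x))) as H1.
  rewrite vaddN in H1.
  pose proof (vle_add E (vopp x) j j (vjoin_ubr E x (vopp x))) as H2.
  rewrite (vaddC _ (vopp x) j) in H2.
  pose proof (vle_trans E _ _ _ H1 H2) as H3.
  replace (vadd j j) with (vscal 2 j) in H3.
  2:{ replace 2 with (1 + 1) by ring. rewrite vscalDl, vscal1. reflexivity. }
  pose proof (vle_scal E (/ 2) _ _ ltac:(lra) H3) as H4.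
  rewrite vscal0r, vscalA in H4. replace (/ 2 * 2) with 1 in H4 by field.
  rewrite vscal1 in H4. exact H4.
Qed.

Lemma vabs_abs (E : BanachLattice) (x : E) : vabs E (vabs E x) = vabs E x.
Proof.
  set (j := vabs E x). pose proof (vabs_ge0 E x) as H0. fold j in H0.
  pose proof (vle_add E vzero j (vopp j) H0) as H1. rewrite vadd0, vaddN in H1.
  apply vle_anti.
  - apply vjoin_lub; [apply vle_refl|]. exact (vle_trans E _ _ _ H1 H0).
  - apply vjoin_ubl.
Qed.

Lemma vnorm_abs (E : BanachLattice) (x : E) : vnorm (vabs E x) = vnorm x.
Proof.
  apply Rle_antisym; apply vnorm_lattice; fold (vabs E x); fold (vabs E (vabs E x));
    rewrite vabs_abs; apply vle_refl.
Qed.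

Lemma pos_abs (E : BanachLattice) (f : E -> R) (x : E) :
  is_linear_functional E f -> (forall y : E, vle vzero y -> 0 <= f y) ->
  Rabs (f x) <= f (vabs E x).
Proof.
  intros Hl Hp. set (j := vabs E x).
  pose proof (vle_add E x j (vopp x) (vjoin_ubl E x (vopp x))) as H1.
  rewrite vaddN in H1.
  pose proof (vle_add E (vopp x) j x (vjoin_ubr E x (vopp x))) as H2.
  rewrite (vaddC _ (vopp x) x), vaddN in H2.
  pose proof (Hp _ H1) as P1. pose proof (Hp _ H2) as P2.
  destruct Hl as [Ha Hs]. rewrite Ha in P1, P2.
  rewrite (linopp E f x (conj Ha Hs)) in P1.
  apply Rabs_le. lra.
Qed.

Theorem lemma4p1 :
  (forall (X : BanachSpace) (xs : nat -> X -> R),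
     (forall n, in_dual X (xs n)) ->
     ~ weakly_null X xs ->
     exists (phi : nat -> nat) (delta : R),
       (forall k, (phi k < phi (S k))%nat) /\ 0 < delta /\
       forall F : list nat, exists x : X,
         vnorm x = 1 /\ forall k, In k F -> delta <= Rabs (xs (phi k) x))
  /\
  (forall (E : BanachLattice) (xs : nat -> E -> R),
     (forall n, in_dual E (xs n)) ->
     (forall n (x : E), vle vzero x -> 0 <= xs n x) ->
     ~ weakly_null E xs ->
     exists (phi : nat -> nat) (delta : R),
       (forall k, (phi k < phi (S k))%nat) /\ 0 < delta /\
       forall F : list nat, exists x : E,
         vle vzero x /\ vnorm x = 1 /\
         forall k, In k F -> delta <= Rabs (xs (phi k) x)).
Proof.
  split.
  - intros X xs Hd Hnw.
    destruct (common X xs Hd Hnw) as [phi [delta [Hphi [Hdel HF]]]].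
    exists phi, delta. split; [exact Hphi|split; [exact Hdel|]].
    intros F. destruct (HF F) as [x [Hx Hk]].
    assert (Hp : 0 < vnorm x).
    { apply (nonzero_of X (xs (phi 0%nat)) x delta); [apply Hd|exact Hdel|].
      apply Hk. left; reflexivity. }
    destruct (normalize X x Hp Hx) as [Hn Hh].
    exists (vscal (/ vnorm x) x). split; [exact Hn|].
    intros k Hin. eapply Rle_trans; [apply Hk; right; exact Hin|]. apply Hh, Hd.
  - intros E xs Hd Hpos Hnw.
    destruct (common E xs Hd Hnw) as [phi [delta [Hphi [Hdel HF]]]].
    exists phi, delta. split; [exact Hphi|split; [exact Hdel|]].
    intros F. destruct (HF F) as [x [Hx Hk]].
    set (j := vabs E x).
    assert (Hj : forall k, In k (0%nat :: F) -> delta <= Rabs (xs (phi k) j)).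
    { intros k Hin. eapply Rle_trans; [apply Hk, Hin|].
      eapply Rle_trans; [apply pos_abs; [apply Hd|apply Hpos]|]. apply Rle_abs. }
    assert (Hjn : vnorm j <= 1) by (unfold j; rewrite vnorm_abs; exact Hx).
    assert (Hp : 0 < vnorm j).
    { apply (nonzero_of E (xs (phi 0%nat)) j delta); [apply Hd|exact Hdel|].
      apply Hj. left; reflexivity. }
    destruct (normalize E j Hp Hjn) as [Hn Hh].
    exists (vscal (/ vnorm j) j). split; [|split; [exact Hn|]].
    + pose proof (vle_scal E (/ vnorm j) _ _ ltac:(left; apply Rinv_0_lt_compat; lra)
        (vabs_ge0 E x)) as H. rewrite vscal0r in H. exact H.
    + intros k Hin. eapply Rle_trans; [apply Hj; right; exact Hin|]. apply Hh, Hd.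
Qed.
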